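(* Let $\pi$ be drawn uniformly at random among all permutations of $[n]$, independently of $\mathbf v\sim\mathcal F$. For every agent $i\in[n]$, every price $p>0$, and every $\alpha>0$, \[ \mathbb{E}_{\mathbf v,\pi}\Big[\min\Big\{\alpha,\sum_{j\in B_\pi(i)}y^*_j(v_j,p)\Big\}\Big]\ \le\ \max\{\alpha,1/2\}\;\mathbb{E}_{\mathbf v,\pi}\Big[\sum_{j\in[n]}y_j(\mathbf v,p,\pi)\Big]. \]
   Context: There are $n$ agents $[n]$ and one divisible item of size $1$. Each agent $i$ has a non-decreasing concave valuation $v_i:[0,1]\to\mathbb{R}_{\ge0}$ drawn independently from a known distribution $\mathcal F_i$; $\mathbf v\sim\mathcal F=\mathcal F_1\times\cdots\times\mathcal F_n$. For a price $p>0$, $y^*_i(v_i,p)\in[0,1]$ denotes a maximizer of $z\mapsto v_i(z)-pz$ over $[0,1]$ (fixed measurable selection). For an ordering $\pi$ of $[n]$, $B_\pi(i)$ is the set of agents acting before $i$ in $\pi$, and $y_i(\mathbf v,p,\pi)=\min\{y^*_i(v_i,p),\max\{0,1-\sum_{j\in B_\pi(i)}y^*_j(v_j,p)\}\}$ is the fraction agent $i$ buys in sequential posted pricing at price $p$ per unit in order $\pi$; in particular $\sum_j y_j(\mathbf v,p,\pi)=\min\{1,\sum_j y^*_j(v_j,p)\}$. *)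

(* Defs.v *)
From HB Require Import structures.
From mathcomp Require Import all_boot all_order all_algebra all_fingroup.
From mathcomp Require Import all_classical all_reals all_analysis.
Set Implicit Arguments. Unset Strict Implicit. Unset Printing Implicit Defensive.
Import Order.TTheory GRing.Theory Num.Theory.
Local Open Scope classical_set_scope.
Local Open Scope ring_scope.

(* Mutual independence of a finite family of random elements
   v i : Omega -> V (product rule for all families of measurable sets;
   taking some A i = setT gives the product rule for every subfamily). *)
Definition mutually_independent {d dV : measure_display}
  {Omega : measurableType d} {R : realType} (P : probability Omega R)
  {V : measurableType dV} {n : nat} (v : 'I_n -> Omega -> V) : Prop :=
  forall A : 'I_n -> set V, (forall i, measurable (A i)) ->
    P (\bigcap_(i in [set: 'I_n]) (v i @^-1` A i)) =
    (\prod_(i < n) fine (P (v i @^-1` A i)))%:E.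

(* An ordering pi of [n] is a permutation: agent j acts at position pi j.
   B_pi(i) = agents acting before i. *)
Definition before {n : nat} (pi : 'S_n) (i : 'I_n) : pred 'I_n :=
  fun j => (pi j < pi i)%N.

(* Fraction bought by agent i in sequential posted pricing:
   y_i = min{ y*_i, max{0, 1 - sum_{j in B_pi(i)} y*_j } },
   where ys j is y*_j(v_j,p). *)
Definition bought {R : realType} {n : nat} (ys : 'I_n -> R) (pi : 'S_n)
  (i : 'I_n) : R :=
  Num.min (ys i) (Num.max 0 (1 - \sum_(j | before pi i j) ys j)).

(* Main.v *)
Require Import Defs.
From HB Require Import structures.
From mathcomp Require Import all_boot all_order all_algebra all_fingroup.
From mathcomp Require Import all_classical all_reals all_analysis.
Local Open Scope classical_set_scope.
From mathcomp Require Import zify ring lra.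
Import Order.TTheory GRing.Theory Num.Theory.
Local Open Scope ring_scope.

Section Pw.
Variables (R : realType) (n : nat) (ys : 'I_n -> R).
Hypothesis hys : forall j, 0 <= ys j <= 1.

Lemma bought_ge0 pi j : 0 <= bought ys pi j.
Proof. by rewrite /bought le_min le_max lexx (andP (hys j)).1. Qed.

Lemma bought_le pi j : bought ys pi j <= ys j.
Proof. by rewrite /bought ge_min lexx. Qed.

Lemma sum_bought_ge pi : Num.min 1 (\sum_j ys j) <= \sum_j bought ys pi j.
Proof.
case: (boolP [exists j, bought ys pi j < ys j]) => [/existsP [j0 Hj0]|].
  case: (@arg_minnP _ j0 (fun k => bought ys pi k < ys k) (fun k => nat_of_ord (pi k)) Hj0) => j Hj Hmin.
  have Hbef : \sum_(k | before pi j k) bought ys pi k = \sum_(k | before pi j k) ys k.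
    apply: eq_bigr => k Hk; apply/eqP; rewrite eq_le bought_le /=.
    rewrite leNgt; apply/negP => Hlt.
    have := Hmin k Hlt; rewrite /before in Hk; lia.
  rewrite [X in _ <= X](bigID (before pi j)) /= Hbef.
  rewrite [X in _ + X](bigD1 j) /=; last by rewrite /before /=; lia.
  idtac.
  have Hm : Num.min 1 (\sum_j ys j) <= 1 by rewrite ge_min lexx.
  have Hbj : bought ys pi j = Num.max 0 (1 - \sum_(k | before pi j k) ys k).
    move: Hj; rewrite /bought.
    by rewrite minEle; case: ifP => // _; rewrite ltxx.
  rewrite Hbj.
  have H0 : 0 <= \sum_(i0 | ~~ before pi j i0 && (i0 != j)) bought ys pi i0.
    by apply: sumr_ge0 => k _; apply: bought_ge0.
  have H1 : 1 - \sum_(k | before pi j k) ys k <= Num.max 0 (1 - \sum_(k | before pi j k) ys k) by rewrite le_max lexx orbT.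
  lra.
move=> Hn; apply: (@le_trans _ _ (\sum_j ys j)); first by rewrite ge_min lexx orbT.
apply: ler_sum => j _; move/existsPn: Hn => /(_ j).
by rewrite -leNgt.
Qed.
Lemma sum_before_le i : 2 * \sum_(pi : 'S_n) \sum_(j | before pi i j) ys j
   <= n`!%:R * \sum_j ys j.
Proof.
pose r : 'S_n := perm (@rev_ord_inj n).
have Hb pi j : before (pi * r) i j = (pi i < pi j)%N.
  rewrite /before !permM !permE /=.
  have := ltn_ord (pi i); have := ltn_ord (pi j); lia.
have E : \sum_(pi : 'S_n) \sum_(j | before pi i j) ys j =
         \sum_(pi : 'S_n) \sum_(j | before (pi * r) i j) ys j.
  by rewrite (reindex_inj (mulIg r)).
rewrite mulr2n mulrDl mul1r {2}E -big_split /=.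
rewrite -[n`!]card_Sn mulr_natl -sumr_const.
apply: ler_sum => pi _; rewrite (eq_bigl _ _ (Hb pi)).
rewrite [X in _ <= X](bigID (before pi i)) lerD2l /before.
rewrite [X in X <= _]big_mkcond [X in _ <= X]big_mkcond /=.
apply: ler_sum => j _.
case: ifP => H1; case: ifP => H2 //=; try lia. all: try by rewrite (andP (hys j)).1. all: try by rewrite lexx.
Qed.
Lemma pointwise i (alpha : R) : 0 < alpha ->
  \sum_(pi : 'S_n) Num.min alpha (\sum_(j | before pi i j) ys j) <=
  Num.max alpha (1/2) * \sum_(pi : 'S_n) \sum_j bought ys pi j.
Proof.
move=> ha.
set S := \sum_j ys j.
set N : R := n`!%:R.
have HS : 0 <= S by apply: sumr_ge0 => j _; rewrite (andP (hys j)).1.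
have HN : 0 <= N by rewrite /N ler0n.
have HX := sum_before_le i; rewrite -/S -/N in HX.
have Hm1 : alpha <= Num.max alpha (1/2) by rewrite le_max lexx.
have Hm2 : 1/2 <= Num.max alpha (1/2) by rewrite le_max lexx orbT.
have HR : N * Num.min 1 S <= \sum_(pi : 'S_n) \sum_j bought ys pi j.
  rewrite /N -[n`!]card_Sn mulr_natl -sumr_const.
  by apply: ler_sum => pi _; apply: sum_bought_ge.
have HL1 : \sum_(pi : 'S_n) Num.min alpha (\sum_(j | before pi i j) ys j)
    <= N * alpha.
  rewrite /N -[n`!]card_Sn mulr_natl -sumr_const.
  by apply: ler_sum => pi _; rewrite ge_min lexx.
have HL2 : \sum_(pi : 'S_n) Num.min alpha (\sum_(j | before pi i j) ys j)
    <= \sum_(pi : 'S_n) \sum_(j | before pi i j) ys j.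
  by apply: ler_sum => pi _; rewrite ge_min lexx orbT.
have Hm0 : 0 <= Num.max alpha (1/2) by lra.
apply: le_trans (ler_wpM2l Hm0 HR).
case: (leP S 1) => HS1.
  idtac.
  have : (1/2) * (N * S) <= Num.max alpha (1/2) * (N * S).
    by apply: ler_wpM2r => //; apply: mulr_ge0.
  lra.
rewrite mulr1.
have : alpha * N <= Num.max alpha (1/2) * N by apply: ler_wpM2r.
lra.
Qed.
End Pw.

Theorem mainTheorem3
  (R : realType) (d dV : measure_display)
  (Omega : measurableType d) (P : probability Omega R)
  (V : measurableType dV) (val : V -> R -> R)
  (n : nat) (v : 'I_n -> Omega -> V)
  (ystar : 'I_n -> V -> R -> R)
  (* valuations: non-negative, non-decreasing, concave on [0,1] *)
  (hval_nonneg : forall x z, 0 <= z <= 1 -> 0 <= val x z)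
  (hval_mono : forall x z1 z2, 0 <= z1 -> z1 <= z2 -> z2 <= 1 ->
       val x z1 <= val x z2)
  (hval_concave : forall x z1 z2 t, 0 <= z1 <= 1 -> 0 <= z2 <= 1 ->
       0 <= t <= 1 ->
       t * val x z1 + (1 - t) * val x z2 <= val x (t * z1 + (1 - t) * z2))
  (* y*_i(v_i,p) is a maximizer of z |-> v_i(z) - p z over [0,1] *)
  (hystar_range : forall i x p, 0 < p -> 0 <= ystar i x p <= 1)
  (hystar_max : forall i x p z, 0 < p -> 0 <= z <= 1 ->
       val x z - p * z <= val x (ystar i x p) - p * ystar i x p)
  (* ... and a measurable selection *)
  (hystar_meas : forall i p, 0 < p -> measurable_fun setT (fun x => ystar i x p))
  (* v_i ~ F_i independently *)
  (hv_meas : forall i, measurable_fun setT (v i))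
  (hv_indep : mutually_independent P v)
  (i : 'I_n) (p alpha : R) (hp : 0 < p) (halpha : 0 < alpha) :
  (* E_{v,pi} with pi uniform on permutations, independent of v *)
  ((n`!%:R)^-1%:E * \sum_(pi : 'S_n)
      \int[P]_w (Num.min alpha
                   (\sum_(j | before pi i j) ystar j (v j w) p))%:E <=
   (Num.max alpha (1/2))%:E *
     ((n`!%:R)^-1%:E * \sum_(pi : 'S_n)
      \int[P]_w (\sum_(j < n)
                   bought (fun k => ystar k (v k w) p) pi j)%:E))%E.
Proof.
have my k : measurable_fun setT (fun w => ystar k (v k w) p).
  exact: measurableT_comp (hystar_meas k p hp) (hv_meas k).
have y01 w k : 0 <= ystar k (v k w) p <= 1 by apply: hystar_range.
have mS (Q : pred 'I_n) :
    measurable_fun setT (fun w => \sum_(j | Q j) ystar j (v j w) p).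
  rewrite (_ : (fun w => _) = fun w => \sum_(j <- index_enum 'I_n)
      (if Q j then ystar j (v j w) p else 0)); last first.
    by apply/funext => w; rewrite big_mkcond.
  apply: measurable_sum => j; case: (Q j) => //; exact: measurable_cst.
have sum_int (F : 'S_n -> Omega -> R) :
    (forall pi, measurable_fun setT (F pi)) -> (forall pi w, 0 <= F pi w) ->
    (\sum_(pi : 'S_n) \int[P]_w (F pi w)%:E = \int[P]_w (\sum_pi F pi w)%:E)%E.
  move=> mF F0; rewrite -ge0_integral_sum //.
  - by apply: eq_integral => w _; rewrite sumEFin.
  - by move=> pi; apply/measurable_realfun.measurable_EFinP.
  - by move=> pi w _; rewrite lee_fin.
have mA pi : measurable_fun setT (fun w => Num.min alpha
                   (\sum_(j | before pi i j) ystar j (v j w) p)).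
  exact: (measurable_realfun.measurable_minr (measurable_cst alpha) (mS _)).
have mB pi : measurable_fun setT (fun w => \sum_(j < n)
                   bought (fun k => ystar k (v k w) p) pi j).
  apply: measurable_sum => j; rewrite /bought.
  apply: (measurable_realfun.measurable_minr (my j)).
  exact: (measurable_realfun.measurable_maxr (measurable_cst (0:R)) (measurable_realfun.measurable_funB (measurable_cst (1:R)) (mS _))).
rewrite (sum_int (fun pi w => Num.min alpha
                   (\sum_(j | before pi i j) ystar j (v j w) p))) //; last first.
  by move=> pi w; rewrite le_min (ltW halpha) /=; apply: sumr_ge0 => j _; case/andP: (y01 w j).
rewrite (sum_int (fun pi w => \sum_(j < n)
                   bought (fun k => ystar k (v k w) p) pi j)) //; last first.
  by move=> pi w; apply: sumr_ge0 => j _; apply: bought_ge0.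
rewrite muleCA; apply: lee_wpmul2l.
  by rewrite lee_fin invr_ge0 ler0n.
rewrite -ge0_integralZl //; last 3 first.
- by apply/measurable_realfun.measurable_EFinP; apply: measurable_sum.
- by move=> w _; rewrite lee_fin; apply: sumr_ge0 => pi _; apply: sumr_ge0 => j _; apply: bought_ge0.
- by rewrite lee_fin le_max (ltW halpha).
apply: ge0_le_integral => //.
- by move=> w _; rewrite lee_fin; apply: sumr_ge0 => pi _; rewrite le_min (ltW halpha) /=; apply: sumr_ge0 => j _; case/andP: (y01 w j).
- by apply/measurable_realfun.measurable_EFinP; apply: measurable_sum.
- apply: measurable_funeM; apply/measurable_realfun.measurable_EFinP; apply: measurable_sum => pi; exact: mB.
- move=> w _; rewrite -EFinM lee_fin.
  exact: (@pointwise R n (fun k => ystar k (v k w) p) (y01 w) i alpha halpha).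
Qed.
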